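(* Let $G$ be a finite group and let $k$ be the core of $|F(G)|$. Then for every $i \geq 0$, \[ \nu_{i+1}(G) = [F(G), \nu_i(G)]\, \nu_i(G)^k , \] where $\nu_i(G)^k$ denotes the subgroup generated by all $k$-th powers of elements of $\nu_i(G)$.
   Context: For a finite group $G$, $F(G)$ denotes its Fitting subgroup (the largest nilpotent normal subgroup). The $F$-central series of $G$ is defined by $\nu_0(G)=F(G)$ and, for $i\ge 0$, $\nu_{i+1}(G)$ is the smallest normal subgroup $N$ of $F(G)$ with $N\le \nu_i(G)$ such that $\nu_i(G)/N$ is centralized by $F(G)$ and is a direct product of elementary abelian groups. The core of a positive integer $n=p_1^{e_1}\cdots p_r^{e_r}$ (distinct primes $p_j$, all $e_j\ge 1$) is $p_1\cdots p_r$. *)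

(* Defs.v *)
From HB Require Import structures.
From mathcomp Require Import all_boot all_fingroup all_solvable.
Set Implicit Arguments. Unset Strict Implicit. Unset Printing Implicit Defensive.
Local Open Scope group_scope.

Definition core (n : nat) : nat := (\prod_(p <- primes n) p)%N.

Definition elem_dprod (hT : finGroupType) (Q : {set hT}) : Prop :=
  exists s : seq {group hT},
    \big[dprod/1]_(H <- s) (H : {set hT}) = Q /\
    (forall H, H \in s -> exists2 p, prime p & p.-abelem H).

Definition Fstep_ok (gT : finGroupType) (G M N : {group gT}) : Prop :=
  [/\ N <| 'F(G), N \subset M,
      M / N \subset 'C('F(G) / N) & elem_dprod (M / N)].

Definition Fcentral_series (gT : finGroupType) (G : {group gT})
    (nu : nat -> {group gT}) : Prop :=
  nu 0 = 'F(G) :> {set gT} /\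
  forall i, Fstep_ok G (nu i) (nu i.+1) /\
    (forall N : {group gT}, Fstep_ok G (nu i) N -> nu i.+1 \subset N).

(* Main.v *)
Require Import Defs.
From HB Require Import structures.
From mathcomp Require Import all_boot all_fingroup all_solvable.
Set Implicit Arguments. Unset Strict Implicit. Unset Printing Implicit Defensive.

Lemma prod_primes_gt0 s : all prime s -> 0 < \prod_(q <- s) q.
Proof.
elim: s => [|q s IH] /=; first by rewrite big_nil.
by case/andP=> pq ps; rewrite big_cons muln_gt0 prime_gt0 // IH.
Qed.

Lemma logn_prod_primes p s : uniq s -> all prime s ->
  logn p (\prod_(q <- s) q) = (p \in s).
Proof.
elim: s => [|q s IH] /=; first by rewrite big_nil logn1.
case/andP=> qs us /andP[pq ps].
rewrite big_cons (lognM _ (prime_gt0 pq) (prod_primes_gt0 ps)).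
rewrite (logn_prime _ pq) IH // in_cons.
case: eqP => [->|] /=; first by rewrite (negbTE qs).
by rewrite add0n.
Qed.

Lemma core_gt0 n : 0 < core n.
Proof. by rewrite /core prod_primes_gt0 //; apply/allP => p; rewrite mem_primes => /andP[]. Qed.

Lemma logn_core p n : logn p (core n) = (p \in primes n).
Proof. by rewrite /core logn_prod_primes ?primes_uniq //; apply/allP => q; rewrite mem_primes => /andP[]. Qed.

Lemma dvdn_core p n : prime p -> 0 < n -> p %| n -> p %| core n.
Proof.
move=> pp n0 pn; rewrite -(expn1 p) pfactor_dvdn ?core_gt0 // logn_core.
by rewrite mem_primes pp n0 pn.
Qed.

Lemma pnat_dvd_core p m n : prime p -> p.-nat m -> m %| core n -> m %| p.
Proof.
move=> pp /p_natP[a ->] hd; rewrite -{2}(expn1 p) dvdn_exp2l //.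
have := hd; rewrite pfactor_dvdn ?core_gt0 // logn_core.
by move/leq_trans; apply; case: (_ \in _).
Qed.

Local Open Scope group_scope.

Section Main.
Variables (gT : finGroupType) (G : {group gT}).
Local Notation F := 'F(G).
Local Notation k := (core #|'F(G)|).

Definition pw (M : {set gT}) := [set x ^+ k | x in M].

Lemma pw_sub (M : {group gT}) : pw M \subset M.
Proof. by apply/subsetP => y /imsetP[x Mx ->]; apply: groupX. Qed.

Lemma norm_pw (M : {group gT}) (A : {set gT}) :
  A \subset 'N(M) -> A \subset 'N(pw M).
Proof.
move=> nMA; apply/subsetP => y Ay; rewrite inE; apply/subsetP => z.
rewrite mem_conjg => /imsetP[x Mx ez].
have -> : z = (x ^ y) ^+ k by rewrite -conjXg -ez conjgKV.
by apply: imset_f; rewrite memJ_norm // (subsetP nMA).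
Qed.

Definition Dg (M : {group gT}) := ([~: F, M] <*> <<pw M>>)%G.

Section Step.
Variable M : {group gT}.
Hypothesis nMF : M <| F.

Let sMF : M \subset F := normal_sub nMF.
Let nMF' : F \subset 'N(M) := normal_norm nMF.
Let sRM : [~: F, M] \subset M.
Proof. by rewrite commg_subr. Qed.
Let sPM : <<pw M>> \subset M.
Proof. by rewrite gen_subG pw_sub. Qed.
Let nRF : F \subset 'N([~: F, M]).
Proof. exact: normsR (normG _) nMF'. Qed.
Let nPF : F \subset 'N(<<pw M>>).
Proof. exact: subset_trans (norm_pw nMF') (norm_gen _). Qed.

Lemma DgE : Dg M :=: [~: F, M] * <<pw M>>.
Proof. by rewrite /= norm_joinEr // (subset_trans sPM (subset_trans sMF nRF)). Qed.

Lemma Dg_subM : Dg M \subset M.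
Proof. by rewrite DgE mul_subG. Qed.

Lemma Dg_normal : Dg M <| F.
Proof.
by rewrite /normal (subset_trans Dg_subM sMF) DgE normsM.
Qed.

Lemma Dg_ok : Fstep_ok G M (Dg M).
Proof.
have nDF := Dg_normal.
have nMD : M \subset 'N(Dg M) := subset_trans sMF (normal_norm nDF).
have sRD : [~: F, M] \subset Dg M := joing_subl _ _.
have sPD : <<pw M>> \subset Dg M := joing_subr _ _.
split => //; first exact: Dg_subM.
  by apply: quotient_cents2r; rewrite commGC.
pose Q := (M / Dg M)%G.
have abQ : abelian Q.
  apply: quotient_cents2r; apply: subset_trans sRD.
  exact: commgSS.
have expQ : forall x, x \in Q -> x ^+ k = 1.
  move=> x /morphimP[y Ny My ->]; rewrite -morphX //; apply: coset_id.
  by apply: (subsetP sPD); apply: mem_gen; apply: imset_f.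
exists [seq 'O_p(Q)%G | p : nat <- primes #|Q|]; split.
  by rewrite big_map; exact: (nilpotent_Fitting (abelian_nil abQ)).
move=> H /mapP[p]; rewrite mem_primes => /and3P[pp _ _] ->.
exists p => //; apply/abelemP => //; split.
  exact: abelianS (pcore_sub _ _) abQ.
move=> x Ox; apply/eqP; rewrite -order_dvdn.
apply: (@pnat_dvd_core p _ #|F|) => //.
  exact: mem_p_elt (pcore_pgroup _ _) Ox.
by rewrite order_dvdn expQ // (subsetP (pcore_sub p Q)).
Qed.

Lemma Dg_min (N : {group gT}) : Fstep_ok G M N -> Dg M \subset N.
Proof.
case=> nNF sNM cMF [s [defQ abs]].
have nMN : M \subset 'N(N) := subset_trans sMF (normal_norm nNF).
rewrite join_subG; apply/andP; split.
  by rewrite -(quotient_cents2 (normal_norm nNF) nMN) centsC.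
have abQ : abelian (M / N) := subset_trans cMF (centS (quotientS _ sMF)).
have sHQ : forall H, H \in s -> (H : {set _}) \subset M / N.
  move=> H Hs; rewrite -(bigdprodWY defQ); apply: subset_trans (subset_gen _).
  by rewrite bigcup_seq; apply: (bigcup_sup H).
have expQ : exponent (M / N) %| k.
  rewrite -(bigdprodWY defQ) abelian_exponent_gen; last first.
    apply: abelianS abQ; rewrite bigcup_seq; apply/bigcupsP => H; exact: sHQ.
  apply/exponentP => x; rewrite bigcup_seq => /bigcupP[H Hs xH].
  have [p pp /abelemP[] // _ eH] := abs H Hs.
  have xQ := subsetP (sHQ H Hs) x xH.
  apply/eqP; rewrite -order_dvdn.
  have hp : #[x] %| p by rewrite order_dvdn eH.
  have [->|n1] := eqVneq #[x] 1%N; first exact: dvd1n.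
  move/(prime_nt_dvdP pp n1): hp => ox; rewrite ox.
  apply: dvdn_core => //; rewrite -ox.
  apply: dvdn_trans (order_dvdG xQ) _.
  rewrite card_quotient //; apply: dvdn_trans (dvdn_indexg _ _) _.
  exact: cardSg.
rewrite gen_subG; apply/subsetP => z /imsetP[y My ->].
have Ny := subsetP nMN y My.
apply: coset_idr; first exact: groupX.
by rewrite morphX //; apply: (exponentP expQ); apply: mem_quotient.
Qed.

End Step.

Fixpoint fser i : {group gT} := if i is j.+1 then Dg (fser j) else 'F(G)%G.

Lemma fser_normal i : fser i <| F.
Proof. elim: i => [|i IH] /=; [exact: normal_refl | exact: Dg_normal IH]. Qed.

End Main.

Theorem lemma2p1 (gT : finGroupType) (G : {group gT}) :
  (exists nu : nat -> {group gT}, Fcentral_series G nu) /\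
  forall nu : nat -> {group gT}, Fcentral_series G nu ->
    forall i : nat,
      (nu i.+1 : {set gT}) =
        [~: 'F(G), nu i] * <<[set x ^+ core #|'F(G)| | x in nu i]>>.
Proof.
split.
  exists (fser G); split => // i; split; first exact: Dg_ok (fser_normal G i).
  by move=> N; exact: (@Dg_min gT G (fser G i) (fser_normal G i) N).
move=> nu [h0 hs].
have nuN : forall i, nu i <| 'F(G).
  case=> [|i]; first by rewrite h0 normal_refl.
  by case: (hs i) => -[] //.
move=> i; rewrite -(DgE (nuN i)); apply/eqP; rewrite eqEsubset.
rewrite ((hs i).2 _ (Dg_ok (nuN i))) /=.
exact: Dg_min (nuN i) _ (hs i).1.
Qed.
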